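(* Let $t>2$ and let $G=K_{n_1,n_2,\dots,n_t}$ be the complete $t$-partite graph with parts of sizes $n_1,\dots,n_t$, where $n_i\geq 2$ for all $i=1,\dots,t$. Then $G$ is a $\mathcal{P}$ position for Grim if and only if $|V(G)|=n_1+\dots+n_t$ is even.
   Context: Grim is a two-player game on a finite simple undirected graph. Any isolated vertices of the starting graph are deleted before play begins. Players alternate moves; a move consists of selecting a vertex of the current graph and deleting it together with all its incident edges, after which every vertex that has become isolated is also deleted. The player who makes the last legal move wins (a player facing the empty graph has no move and loses). A graph is an $\mathcal{N}$ position if the player about to move has a winning strategy, and a $\mathcal{P}$ position otherwise. *)

(* Defs.v *)
From mathcomp Require Import all_boot.
Set Implicit Arguments. Unset Strict Implicit. Unset Printing Implicit Defensive.

(* A finite simple graph is a symmetric irreflexive relation e on a finType T.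
   A Grim position is the subgraph induced by a vertex set S (a {set T}). *)

Definition non_isolated (T : finType) (e : rel T) (S : {set T}) : {set T} :=
  [set x in S | [exists y in S, e x y]].

Definition grim_move (T : finType) (e : rel T) (S : {set T}) (v : T) : {set T} :=
  non_isolated e (S :\ v).

Definition grim_start (T : finType) (e : rel T) : {set T} :=
  non_isolated e [set: T].

(* P-positions (previous player wins) and N-positions (next player wins),
   normal play: a player with no move loses. *)
Inductive Ppos (T : finType) (e : rel T) : {set T} -> Prop :=
  | PposI (S : {set T}) : (forall v : T, v \in S -> Npos e (grim_move e S v)) -> Ppos e S
with Npos (T : finType) (e : rel T) : {set T} -> Prop :=
  | NposI (S : {set T}) (v : T) : v \in S -> Ppos e (grim_move e S v) -> Npos e S.

(* Complete t-partite graph K_{n_1,...,n_t}: vertices are pairs (i, j) with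
   i a part index and j < n i; two vertices are adjacent iff in different parts. *)
Definition cmp_vertex (t : nat) (n : 'I_t -> nat) := {i : 'I_t & 'I_(n i)}.

Definition cmp_edge (t : nat) (n : 'I_t -> nat) : rel (cmp_vertex n) :=
  fun x y => tag x != tag y.

(* Main.v *)
Require Import Defs.
From mathcomp Require Import all_boot.
Set Implicit Arguments. Unset Strict Implicit.

Section Grim.
Variable t : nat.
Variable n : 'I_t -> nat.
Local Notation V := (cmp_vertex n).
Local Notation e := (@cmp_edge t n).

Definition cnt (S : {set V}) (i : 'I_t) := #|[set x in S | tag x == i]|.

Lemma cnt_D1 (S : {set V}) v i : v \in S ->
  cnt (S :\ v) i = cnt S i - (tag v == i).
Proof.
move=> vS; rewrite /cnt.
have [Hv|Hv] := eqVneq (tag v) i.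
  rewrite (cardsD1 v [set x in S | tag x == i]) inE vS Hv eqxx /= add1n subn1 /=.
  by apply: eq_card => x; rewrite !inE; case: (x == v).
rewrite /= subn0; apply: eq_card => x; rewrite !inE.
by case: (eqVneq x v) => [->|]; rewrite ?(negbTE Hv) ?andbF.
Qed.

Lemma card_cnt (S : {set V}) : #|S| = \sum_i cnt S i.
Proof.
rewrite /cnt (eq_bigr (fun i => \sum_(x in S | tag x == i) 1)); last first.
  by move=> i _; rewrite sum1_card; apply: eq_card => x; rewrite !inE.
by rewrite -(partition_big (fun x : V => tag x) predT) //= sum1_card.
Qed.

Lemma ni_sub (S : {set V}) : non_isolated e S \subset S.
Proof. by apply/subsetP => x; rewrite inE => /andP[]. Qed.

Lemma ni_full (S : {set V}) x y : x \in S -> y \in S -> tag x != tag y ->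
  non_isolated e S = S.
Proof.
move=> xS yS nxy; apply/setP => z; rewrite inE.
case zS: (z \in S) => //=; apply/existsP.
have [Hz|Hz] := eqVneq (tag z) (tag x).
  by exists y; rewrite yS /= /cmp_edge Hz.
by exists x; rewrite xS /= /cmp_edge Hz.
Qed.

Lemma ni_cases (S : {set V}) : non_isolated e S = S \/ non_isolated e S = set0.
Proof.
case: (set_0Vmem (non_isolated e S)) => [->|[x]]; first by right.
rewrite inE => /andP[xS /existsP[y /andP[yS exy]]].
by left; exact: (ni_full xS yS exy).
Qed.

Definition W (S : {set V}) := [/\ non_isolated e S = S, (forall i, cnt S i != 1) & ~~ odd #|S|].
Definition N' (S : {set V}) := odd #|S| /\ (forall i j, cnt S i = 1 -> cnt S j = 1 -> i = j).

Lemma W_ni (S : {set V}) : (forall i, cnt S i != 1) -> ~~ odd #|S| -> W (non_isolated e S).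
Proof.
move=> H1 H2; case: (ni_cases S) => H; rewrite H; first by split.
split.
- by apply/eqP; rewrite -subset0 ni_sub.
- by move=> i; rewrite /cnt (_ : [set x in set0 | _] = set0) ?cards0 //; apply/setP => x; rewrite !inE.
- by rewrite cards0.
Qed.

Lemma pick_tag (S : {set V}) i : 0 < cnt S i -> exists2 v, v \in S & tag v = i.
Proof.
rewrite /cnt card_gt0 => /set0Pn[v]; rewrite inE => /andP[vS /eqP]; by exists v.
Qed.

Lemma W_move (S : {set V}) v : W S -> v \in S -> N' (grim_move e S v).
Proof.
move=> [Hn Hc He] vS.
have c1 : 0 < cnt S (tag v) by rewrite /cnt card_gt0; apply/set0Pn; exists v; rewrite inE vS eqxx.
have c2 : 1 < cnt S (tag v) by move: (Hc (tag v)); case: (cnt S (tag v)) c1 => [|[]].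
have : 0 < cnt (S :\ v) (tag v) by rewrite cnt_D1 // eqxx subn_gt0.
case/pick_tag => w wS tw.
move: vS; rewrite -{1}Hn inE => /andP[vS /existsP[y /andP[yS vy]]].
have yS' : y \in S :\ v by rewrite !inE yS andbT; apply/eqP => yv; move: vy; rewrite yv /cmp_edge eqxx.
have ->: grim_move e S v = S :\ v.
  apply: (ni_full wS yS'); by rewrite tw.
split.
  by move: He; rewrite (cardsD1 v S) vS add1n /= negbK.
have key i : cnt (S :\ v) i = 1 -> i = tag v.
  rewrite cnt_D1 //; have [->|Hi] := eqVneq (tag v) i => //.
  by rewrite subn0 => /eqP; rewrite (negbTE (Hc i)).
by move=> i j /key -> /key ->.
Qed.

Lemma even_sum (S : {set V}) : (forall i, cnt S i = 0 \/ cnt S i = 2) -> ~~ odd #|S|.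
Proof.
move=> H; rewrite card_cnt; apply: (big_ind (fun x => ~~ odd x)) => //.
  by move=> x y Hx Hy; rewrite oddD (negbTE Hx) (negbTE Hy).
by move=> i _; case: (H i) => ->.
Qed.

Lemma N_move (S : {set V}) : N' S -> exists2 v, v \in S & W (grim_move e S v).
Proof.
move=> [Ho Hu].
have fin v : v \in S -> (forall j, cnt (S :\ v) j != 1) ->
    exists2 v, v \in S & W (grim_move e S v).
  move=> vS H; exists v => //; apply: W_ni => //.
  by move: Ho; rewrite (cardsD1 v S) vS add1n /=.
case: (boolP [exists i, cnt S i == 1]) => [/existsP[i /eqP Hi]|Hno].
  have [v vS tv] := @pick_tag S i ltac:(by rewrite Hi).
  apply: (fin v vS) => j; rewrite cnt_D1 // tv.
  have [<-|ij] := eqVneq i j; first by rewrite Hi.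
  rewrite /= subn0; apply/eqP => Hj; by move: ij; rewrite (Hu _ _ Hi Hj) eqxx.
move/existsPn: Hno => Hno.
have [i Hi] : exists i, 2 < cnt S i.
  apply/existsP; apply: contraLR Ho => /existsPn Hall.
  apply: even_sum => i; move: (Hall i) (Hno i).
  by case: (cnt S i) => [|[|[|k]]] //= _ _; [left|right].
have [v vS tv] := @pick_tag S i (ltn_trans (isT : 0 < 2) Hi).
apply: (fin v vS) => j; rewrite cnt_D1 // tv.
have [<-|ij] := eqVneq i j.
  by move: Hi; case: (cnt S i) => [|[|[|]]].
by rewrite /= subn0; apply: Hno.
Qed.

Lemma gm_lt (S : {set V}) v : v \in S -> #|grim_move e S v| < #|S|.
Proof.
move=> vS; apply: leq_ltn_trans (subset_leq_card (ni_sub _)) _.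
by rewrite (cardsD1 v S) vS add1n ltnSn.
Qed.

Lemma main_ind k : forall S : {set V}, #|S| < k ->
  (W S -> Ppos e S) /\ (N' S -> Npos e S).
Proof.
elim: k => [//|k IH] S HS; split.
- move=> HW; constructor => v vS.
  apply: (proj2 (IH _ _)); last exact: W_move.
  by apply: leq_trans (gm_lt vS) _; rewrite -ltnS.
- move=> HN; have [v vS HW] := N_move HN.
  apply: (NposI vS); apply: (proj1 (IH _ _)) => //.
  by apply: leq_trans (gm_lt vS) _; rewrite -ltnS.
Qed.

Lemma Ppos_inv (S : {set V}) : Ppos e S -> forall v, v \in S -> Npos e (grim_move e S v).
Proof. by case. Qed.

Lemma Npos_inv (S : {set V}) : Npos e S -> exists2 v, v \in S & Ppos e (grim_move e S v).
Proof. by case=> S0 v vS H; exists v. Qed.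

Lemma excl k : forall S : {set V}, #|S| < k -> Ppos e S -> Npos e S -> False.
Proof.
elim: k => [//|k IH] S HS HP HN.
have [v vS HP'] := Npos_inv HN.
apply: (IH _ _ HP' (Ppos_inv HP vS)).
by apply: leq_trans (gm_lt vS) _; rewrite -ltnS.
Qed.

End Grim.

Theorem theorem3p4 (t : nat) (n : 'I_t -> nat) :
  2 < t -> (forall i, 2 <= n i) ->
  (Ppos (@cmp_edge t n) (grim_start (@cmp_edge t n)) <->
   ~~ odd (\sum_(i < t) n i)).
Proof.
move=> t2 n2.
pose i0 : 'I_t := Ordinal (ltn_trans (isT : 0 < 2) t2).
pose i1 : 'I_t := Ordinal (ltn_trans (isT : 1 < 2) t2).
pose a (i : 'I_t) : cmp_vertex n := Tagged (fun i => 'I_(n i)) (Ordinal (ltnW (n2 i))).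
pose b (i : 'I_t) : cmp_vertex n := Tagged (fun i => 'I_(n i)) (Ordinal (n2 i)).
have start : grim_start (@cmp_edge t n) = setT.
  by apply: (@ni_full t n setT (a i0) (a i1)); rewrite ?in_setT.
have cnt2 i : @cnt t n setT i != 1.
  have ab : a i != b i.
    by apply/eqP => /(congr1 (fun x : cmp_vertex n => nat_of_ord (tagged x))).
  have : #|[set a i; b i]| <= @cnt t n setT i.
    apply: subset_leq_card; apply/subsetP => x; rewrite !inE.
    by case/orP => /eqP->; rewrite eqxx.
  by rewrite cards2 ab; case: (@cnt t n setT i) => [|[]].
have card : #|[set: cmp_vertex n]| = \sum_(i < t) n i.
  rewrite cardsT card_tagged sumnE big_map big_enum /=.
  by apply: eq_bigr => i _; rewrite card_ord.
rewrite start; split.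
- move=> HP; apply/negP => Hodd.
  have HN : Npos (@cmp_edge t n) setT.
    apply: (proj2 (@main_ind t n _ setT (ltnSn _))); split; first by rewrite card.
    by move=> i j /eqP; rewrite (negbTE (cnt2 i)).
  exact: (@excl t n _ setT (ltnSn _) HP HN).
- move=> Hev; apply: (proj1 (@main_ind t n _ setT (ltnSn _))); split => //.
  by rewrite card.
Qed.
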